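(* Let $r\geq 3$ be an integer, let $a,b$ be rational numbers with $0<a\leq b$, and set $h:=a+(r-1)b$. If $G$ is a balanced $r$-partite graph on $rn$ vertices with $\delta^*(G)\geq (1-b/h)n$, then $G$ admits a perfect $(a,b)$-weighted fractional $K_r$-tiling.
   Context: For an $r$-partite graph $G$ with vertex classes $V_1,\dots,V_r$, $G$ is balanced if all classes have the same size, and $\delta^*(G)$ is the largest integer $m$ such that for all $i\neq j$ every vertex of $V_i$ has at least $m$ neighbours in $V_j$. A rooted copy of $K_r$ in $G$ is a copy of $K_r$ with one vertex designated as the root. For an $(a,b)$-weighted rooted copy $K$ of $K_r$, its weighted characteristic vector $\mathbf 1_{a,b,G}(K)\in\mathbb R^{V(G)}$ has entry $a$ at the root, entry $b$ at each other vertex of $K$, and $0$ elsewhere. Let $\mathcal K_{a,b,r}(G)$ be the set of all rooted copies of $K_r$ in $G$ (with this weighting). An $(a,b)$-weighted fractional $K_r$-tiling of $G$ is an assignment of weights $w(K)\geq 0$ to $K\in\mathcal K_{a,b,r}(G)$ such that $\sum_{K}w(K)\mathbf 1_{a,b,G}(K)\leq \mathbf 1$ pointwise (where $\mathbf 1$ is the all-ones vector); it is perfect if equality holds in every coordinate. *)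

(* Defs.v *)
From HB Require Import structures.
From mathcomp Require Import all_boot all_order all_algebra.
Set Implicit Arguments. Unset Strict Implicit. Unset Printing Implicit Defensive.
Import Order.TTheory GRing.Theory Num.Theory.
Local Open Scope ring_scope.

Definition balanced_rpartite (T : finType) (r n : nat) (e : rel T)
    (part : T -> 'I_r) : Prop :=
  [/\ symmetric e, irreflexive e,
      (forall x y, e x y -> part x != part y) &
      (forall i : 'I_r, #|[set v | part v == i]| = n)].

Definition deg_into (T : finType) (r : nat) (e : rel T) (part : T -> 'I_r)
    (v : T) (j : 'I_r) : nat :=
  #|[set u | (part u == j) && e v u]|.

Definition delta_star_ge (R : realFieldType) (T : finType) (r : nat)
    (e : rel T) (part : T -> 'I_r) (x : R) : Prop :=
  forall (v : T) (j : 'I_r), j != part v -> x <= (deg_into e part v j)%:R.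

Definition rooted_Kr (T : finType) (r : nat) (e : rel T) (K : {set T} * T)
    : bool :=
  [&& #|K.1| == r, K.2 \in K.1 &
      [forall x in K.1, forall y in K.1, (x != y) ==> e x y]].

Definition wchar (R : pzRingType) (T : finType) (a b : R) (K : {set T} * T)
    (v : T) : R :=
  if v == K.2 then a else if v \in K.1 then b else 0.

Definition perfect_frac_tiling (R : realFieldType) (T : finType) (r : nat)
    (e : rel T) (a b : R) (w : {set T} * T -> R) : Prop :=
  (forall K, rooted_Kr r e K -> 0 <= w K) /\
  (forall v : T, \sum_(K | rooted_Kr r e K) w K * wchar a b K v = 1).

(* Main.v *)
Require Import Defs.
From HB Require Import structures.
From mathcomp Require Import all_boot all_order all_algebra.
From Stdlib Require Import Classical.
From mathcomp Require Import ring zify.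
Import Order.TTheory GRing.Theory Num.Theory.
Local Open Scope ring_scope.
Set Implicit Arguments. Unset Strict Implicit. Unset Printing Implicit Defensive.

Section Farkas.
Variables (R : realFieldType) (T : finType) (I : eqType).

Lemma farkas (s : seq I) : uniq s -> forall (F : I -> T -> R) (c : T -> R),
  (forall x : T -> R, (forall i, i \in s -> \sum_v F i v * x v <= 0) ->
     \sum_v c v * x v <= 0) ->
  exists lam : I -> R, (forall i, 0 <= lam i) /\
     forall v, c v = \sum_(i <- s) lam i * F i v.
Proof.
elim: s => [|i0 s IH] Us F c H.
  exists (fun _ => 0); split=> // v; rewrite big_nil.
  have := H (fun u => if u == v then c v else 0) (fun i Hi => ltac:(by rewrite in_nil in Hi)).
  rewrite (bigD1 v) //= eqxx big1 => [|u /negbTE->]; last by rewrite mulr0.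
  rewrite addr0 => Hv; apply/eqP; rewrite -sqrf_eq0 eq_le sqr_ge0 andbT.
  by rewrite expr2.
move: Us => /= /andP[i0s Us].
case: (classic (forall x : T -> R, (forall i, i \in s -> \sum_v F i v * x v <= 0) ->
     \sum_v c v * x v <= 0)) => [H1|H1].
  have [lam [lam0 Hl]] := IH Us F c H1.
  exists (fun i => if i == i0 then 0 else lam i); split.
    by move=> i; case: ifP.
  move=> v; rewrite big_cons eqxx mul0r add0r Hl.
  apply: eq_big_seq => i iS; case: eqP => // ei; by move: i0s; rewrite -ei iS.
have [xb Hxb] := not_all_ex_not _ _ H1.
have [Hs Hc] := imply_to_and _ _ Hxb.
have {Hxb H1} Hc : 0 < \sum_v c v * xb v by rewrite ltNge; apply/negP.
set d := \sum_v F i0 v * xb v.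
have dpos : 0 < d.
  rewrite ltNge; apply/negP => dle.
  have : \sum_v c v * xb v <= 0.
    by apply: H => i; rewrite inE => /orP[/eqP->|/Hs].
  by rewrite leNgt Hc.
pose F' i v := F i v - (\sum_u F i u * xb u) / d * F i0 v.
pose c' v := c v - (\sum_u c u * xb u) / d * F i0 v.
have key : forall (G : T -> R) x, \sum_v (G v - (\sum_u G u * xb u) / d * F i0 v) * x v
   = \sum_v G v * (x v - (\sum_u F i0 u * x u) / d * xb v).
  move=> G x.
  transitivity (\sum_v G v * x v - (\sum_u G u * xb u) / d * \sum_v F i0 v * x v).
    rewrite mulr_sumr -sumrB; apply: eq_bigr => v _; by rewrite mulrBl mulrA.
  rewrite [X in _ = X](eq_bigr (fun v => G v * x v - (\sum_u F i0 u * x u) / d * (G v * xb v))); last first.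
    by move=> v _; rewrite mulrBr mulrCA.
  rewrite sumrB -mulr_sumr; congr (_ - _).
  by rewrite mulrAC [RHS]mulrAC; congr (_ / _); exact: mulrC.
have H' : forall x : T -> R, (forall i, i \in s -> \sum_v F' i v * x v <= 0) ->
     \sum_v c' v * x v <= 0.
  move=> x Hx; rewrite /c' key; apply: H => i; rewrite inE => /orP[/eqP->|iS].
    rewrite (eq_bigr (fun v => F i0 v * x v - (\sum_u F i0 u * x u) / d * (F i0 v * xb v))); last first.
      by move=> v _; rewrite mulrBr mulrCA.
    by rewrite sumrB -mulr_sumr -/d divfK ?subrr // gt_eqF.
  by rewrite -key; apply: Hx.
have [mu [mu0 Hmu]] := IH Us F' c' H'.
  exists (fun i => if i == i0 then (\sum_v c v * xb v - \sum_(j <- s) mu j * \sum_v F j v * xb v) / d else mu i).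
  split.
    move=> i1; case: ifP => _ //; apply: divr_ge0; last exact: ltW.
    rewrite subr_ge0; apply: le_trans (ltW Hc).
    rewrite big_seq; apply: sumr_le0 => i2 i2S.
    by rewrite mulr_ge0_le0 ?Hs.
  move=> v; rewrite big_cons eqxx.
  have -> : \sum_(j <- s) (if j == i0 then (\sum_v0 c v0 * xb v0 - \sum_(k <- s) mu k * \sum_v0 F k v0 * xb v0) / d else mu j) * F j v
     = \sum_(j <- s) mu j * F j v.
    apply: eq_big_seq => i3 i3S; case: eqP => // ei; by move: i0s; rewrite -ei i3S.
  have := Hmu v; rewrite /c' /F' => E.
  have -> : c v = c' v + (\sum_u c u * xb u) / d * F i0 v by rewrite /c' subrK.
  rewrite Hmu /F'.
  rewrite (eq_bigr (fun j => mu j * F j v - (mu j * (\sum_u F j u * xb u)) / d * F i0 v)); last first.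
    by move=> j _; rewrite mulrBr !mulrA.
  rewrite sumrB -mulr_suml.
  rewrite -mulr_suml; ring.
Qed.
End Farkas.

Section Core.
Variables (R : realFieldType) (T : finType) (k n : nat) (e : rel T)
  (part : T -> 'I_k.+1) (A B : nat) (y : T -> R).
Hypotheses (A0 : (0 < A)%N) (B0 : (0 < B)%N) (esym : symmetric e) (eirr : irreflexive e)
 (cls : forall j, #|[set v | part v == j]| = n)
 (deg : forall v j, j != part v -> ((A + k*B) * (n - deg_into e part v j) <= B * n)%N)
 (clq : forall x xs, size xs = k -> uniq (x :: xs) ->
    (forall u w, u \in x :: xs -> w \in x :: xs -> u != w -> e u w) ->
    0 <= A%:R * y x + B%:R * \sum_(u <- xs) y u).

Definition VV j := [set v | part v == j].
Definition zz j p := nth 0 (sort <=%R [seq y v | v <- enum (VV j)]) p.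

Lemma pick j (C : {set T}) p : (p < n)%N -> (#|VV j :\: C| <= p)%N ->
  exists x, [/\ x \in C, part x == j & y x <= zz j p].
Proof.
move=> pn HC.
set s := sort <=%R [seq y v | v <- enum (VV j)].
have ss : size s = n by rewrite size_sort size_map -cardE cls.
have srt : sorted <=%R s by apply: sort_sorted; exact: le_total.
case: (boolP [exists x in C, (part x == j) && (y x <= zz j p)]).
  by case/existsP => x /andP[xC /andP[px yx]]; exists x.
rewrite negb_exists => /forallP Hn.
pose P := fun w : R => w <= zz j p.
have c1 : (p.+1 <= count P s)%N.
  rewrite -(cat_take_drop p.+1 s) count_cat.
  have : all P (take p.+1 s).
    apply/(all_nthP 0) => i; rewrite size_takel ?ss // => ip.
    rewrite nth_take // /P /zz -/s.
    apply: (sorted_leq_nth le_trans le_refl 0 srt); rewrite ?inE ?ss //.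
    all: try lia.
  rewrite all_count => /eqP ->; rewrite size_takel ?ss //; exact: leq_addr.
have c2 : count P s = #|[set v in VV j | P (y v)]|.
  have /permP -> := permEl (perm_sort <=%R [seq y v | v <- enum (VV j)]).
  rewrite count_map -size_filter.
  have U : uniq [seq x <- enum (VV j) | preim y P x] by rewrite filter_uniq ?enum_uniq.
  rewrite -(card_uniqP U); apply: eq_card => v.
  by rewrite mem_filter mem_enum inE andbC.
have c3 : (#|[set v in VV j | P (y v)]| <= #|VV j :\: C|)%N.
  apply: subset_leq_card; apply/subsetP => v; rewrite !inE => /andP[pv Pv].
  rewrite pv andbT; apply/negP => vC.
  by have := Hn v; rewrite vC pv /= => /negP; apply.
by have := leq_trans c1 (leq_trans (eq_leq c2) (leq_trans c3 HC)); rewrite ltnn.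
Qed.

Lemma nonnbr_card v j : j != part v ->
  #|[set u | (part u == j) && ~~ e v u]| = (n - deg_into e part v j)%N.
Proof.
move=> jv; rewrite /deg_into -(cls j) -(cardsID [set u | e v u] (VV j)).
have -> : VV j :&: [set u | e v u] = [set u | (part u == j) && e v u].
  by apply/setP => u; rewrite !inE.
have -> : VV j :\: [set u | e v u] = [set u | (part u == j) && ~~ e v u].
  by apply/setP => u; rewrite !inE andbC.
by rewrite addKn.
Qed.

Lemma union_bound j (xs : seq T) : (forall w, w \in xs -> part w != j) ->
  ((A + k*B) * #|[set u | (part u == j) && ~~ all (fun w => e w u) xs]| <= size xs * (B * n))%N.
Proof.
elim: xs => [|w xs IH] Hx.
  rewrite (_ : [set u | _] = set0) ?cards0 ?muln0 //.
  by apply/setP => u; rewrite !inE andbF.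
have Hw : ((A + k*B) * #|[set u | (part u == j) && ~~ e w u]| <= B * n)%N.
  rewrite nonnbr_card; first by apply: deg; rewrite eq_sym; apply: Hx; rewrite inE eqxx.
  by rewrite eq_sym; apply: Hx; rewrite inE eqxx.
have Hr : ((A + k*B) * #|[set u | (part u == j) && ~~ all (fun w => e w u) xs]| <= size xs * (B * n))%N.
  by apply: IH => w' Hw'; apply: Hx; rewrite inE Hw' orbT.
rewrite (_ : [set u | _] = [set u | (part u == j) && ~~ e w u] :|:
     [set u | (part u == j) && ~~ all (fun w => e w u) xs]); last first.
  by apply/setP => u; rewrite !inE /= negb_and andb_orr.
rewrite cardsU /= mulSn.
apply: leq_trans (leq_add Hw Hr).
rewrite -mulnDr leq_mul2l; apply/orP; right; exact: leq_subr.
Qed.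

Lemma step j (xs : seq T) p : (p < n)%N -> (size xs * (B*n) < (A + k*B) * p.+1)%N ->
  (forall u, u \in xs -> part u != j) ->
  exists x, [/\ part x == j, (forall u, u \in xs -> e u x) & y x <= zz j p].
Proof.
move=> pn Hs Hx.
set C := [set u | all (fun w => e w u) xs].
have E : VV j :\: C = [set u | (part u == j) && ~~ all (fun w => e w u) xs].
  by apply/setP => u; rewrite !inE andbC.
have Hc : (#|VV j :\: C| <= p)%N.
  have := leq_ltn_trans (union_bound Hx) Hs; rewrite -E ltn_mul2l; case/andP => _.
  by [].
have [x [xC px yx]] := pick pn Hc.
exists x; split => // u uxs; move: xC; rewrite inE => /allP; apply; exact: uxs.
Qed.

Lemma build (x0 : T) (cl : nat -> 'I_k.+1) (pos : nat -> nat) :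
 (forall i i', (i <= k)%N -> (i' <= k)%N -> i != i' -> cl i != cl i') ->
 (forall m, (m <= k)%N -> (pos m < n)%N /\ (m * (B*n) < (A + k*B) * (pos m).+1)%N) ->
 forall m, (m <= k)%N -> exists xs : seq T, [/\ size xs = m,
   forall i, (i < m)%N -> part (nth x0 xs i) = cl i,
   forall i i', (i < m)%N -> (i' < m)%N -> i != i' -> e (nth x0 xs i) (nth x0 xs i') &
   forall i, (i < m)%N -> y (nth x0 xs i) <= zz (cl i) (pos i)].
Proof.
move=> Hcl Hpos; elim=> [|m IH] mk.
  by exists [::]; split.
have [xs [sz Hp He Hy]] := IH (ltnW mk).
have [pn Hs] := Hpos m (ltnW mk).
have Hu : forall u, u \in xs -> part u != cl m.
  move=> u /(nthP x0) [i ip <-]; rewrite Hp -?sz // ; apply: Hcl; rewrite ?sz in ip; lia.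
have Hs' : (size xs * (B*n) < (A + k*B) * (pos m).+1)%N by rewrite sz.
have [x [/eqP px Hx yx]] := step pn Hs' Hu.
have nthr : forall i, (i < m.+1)%N -> nth x0 (rcons xs x) i = if (i < m)%N then nth x0 xs i else x.
  move=> i im; rewrite nth_rcons sz; case: ltnP => // mi.
  by have -> : i == m by rewrite eqn_leq mi -ltnS im.
exists (rcons xs x); split.
- by rewrite size_rcons sz.
- by move=> i im; rewrite nthr //; case: ltnP => [/Hp //|mi]; rewrite px; congr cl; lia.
- move=> i i' im i'm ii'; rewrite !nthr //.
  case: ltnP => [ip|pi]; case: ltnP => [i'p|p'i] //.
  + by apply: He.
  + by apply: Hx; apply/(nthP x0); exists i; rewrite ?sz.
  + by rewrite esym; apply: Hx; apply/(nthP x0); exists i'; rewrite ?sz.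
  + by exfalso; move/eqP: ii'; apply; lia.
- move=> i im; rewrite nthr //; case: ltnP => [/Hy //|mi].
  by have -> : i = m by lia.
Qed.

Lemma ineq (x0 : T) (cl : nat -> 'I_k.+1) (pos : nat -> nat) :
 (forall i i', (i <= k)%N -> (i' <= k)%N -> i != i' -> cl i != cl i') ->
 (forall m, (m <= k)%N -> (pos m < n)%N /\ (m * (B*n) < (A + k*B) * (pos m).+1)%N) ->
 0 <= A%:R * zz (cl k) (pos k) + B%:R * \sum_(i < k) zz (cl i) (pos i).
Proof.
move=> Hcl Hpos.
have [xs [sz Hp He Hy]] := build x0 Hcl Hpos (leqnn k).
have [pn Hs] := Hpos k (leqnn k).
have Hu : forall u, u \in xs -> part u != cl k.
  move=> u /(nthP x0) [i ip <-]; rewrite Hp -?sz // ; apply: Hcl; rewrite ?sz in ip; lia.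
have Hs' : (size xs * (B*n) < (A + k*B) * (pos k).+1)%N by rewrite sz.
have [x [/eqP px Hx yx]] := step pn Hs' Hu.
have Uxs : uniq xs.
  apply/(uniqP x0) => i i'; rewrite !inE sz => ik i'k E.
  case: (eqVneq i i') => // ii'; have := He i i' ik i'k ii'.
  by rewrite E eirr.
have xxs : x \notin xs by apply/negP => /Hx; rewrite eirr.
have Uc : uniq (x :: xs) by rewrite /= xxs Uxs.
have := clq sz Uc.
have Hadj : forall u w, u \in x :: xs -> w \in x :: xs -> u != w -> e u w.
  move=> u w; rewrite !inE => /orP[/eqP->|uxs] /orP[/eqP->|wxs]; rewrite ?eqxx //.
  - by move=> _; rewrite esym; apply: Hx.
  - by move=> _; apply: Hx.
  - move: uxs wxs => /(nthP x0) [i ip <-] /(nthP x0) [i' i'p <-] ne.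
    apply: He; rewrite -?sz //; apply/negP => /eqP E; move: ne; rewrite E eqxx.
    by [].
move=> /(_ Hadj) H0; apply: le_trans H0 _.
apply: lerD; first by rewrite ler_pM2l ?ltr0n.
rewrite ler_pM2l ?ltr0n // (big_nth x0) sz big_mkord.
by apply: ler_sum => i _; apply: Hy.
Qed.

Lemma sum_blocks (g : nat -> R) K L :
  \sum_(0 <= q < K * L) g q = \sum_(0 <= i < K) \sum_(0 <= u < L) g (i * L + u).
Proof.
elim: K => [|K IH]; first by rewrite mul0n !big_geq.
rewrite big_nat_recr //= -IH mulSn addnC (big_cat_nat _ (leq_addr L (K * L))) //=.
congr (_ + _).
have := big_addn 0 (K*L+L) (K*L) xpredT g; rewrite add0n addKn => ->.
by apply: eq_bigr => u _; rewrite addnC.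
Qed.

Lemma sum_div (f : nat -> R) c q : (0 < c)%N ->
  \sum_(0 <= t < q * c) f (t %/ c)%N = c%:R * \sum_(0 <= u < q) f u.
Proof.
move=> c0; rewrite sum_blocks mulr_sumr; apply: eq_bigr => i _.
rewrite (@eq_big_nat _ _ _ 0 c _ (fun _ => f i)); last first.
  move=> u /andP[_ uc].
  by rewrite divnMDl // divn_small // addn0.
by rewrite sumr_const_nat subn0 mulr_natl.
Qed.

Lemma sum_z j : \sum_(0 <= p < n) zz j p = \sum_(v | part v == j) y v.
Proof.
set s := sort <=%R [seq y v | v <- enum (VV j)].
have ss : size s = n by rewrite size_sort size_map -cardE cls.
transitivity (\sum_(w <- s) w); first by rewrite [RHS](big_nth 0) ss.
rewrite (perm_big _ (permEl (perm_sort <=%R _))) big_map big_enum.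
by apply: eq_bigl => v; rewrite inE.
Qed.

Definition posf t m := (if (m < k)%N then (m*(B*n) + t %/ A) %/ (A + k*B)
   else (k*(B*n) + t %/ B) %/ (A + k*B))%N.

Lemma posf_ok t : (t < A*(B*n))%N -> forall m, (m <= k)%N ->
  (posf t m < n)%N /\ (m * (B*n) < (A + k*B) * (posf t m).+1)%N.
Proof.
move=> tN m mk; rewrite /posf.
have H0 : (0 < A + k*B)%N by rewrite addn_gt0 A0.
have tA : (t %/ A < B*n)%N by rewrite ltn_divLR // mulnC.
have tB : (t %/ B < A*n)%N by rewrite ltn_divLR // -mulnA (mulnC n B).
have Hn : ((A + k*B) * n = A*n + k*(B*n))%N by rewrite mulnDl mulnA.
have key : forall q, (m * (B*n) <= q)%N -> (q < (A + k*B) * n)%N ->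
    (q %/ (A + k*B) < n)%N /\ (m * (B*n) < (A + k*B) * (q %/ (A + k*B)).+1)%N.
  move=> q lq qn; split; first by rewrite ltn_divLR // mulnC.
  by apply: leq_ltn_trans lq _; rewrite mulnC ltn_ceil.
case: (ltnP m k) => mk'.
  apply: key; first exact: leq_addr.
  have : (m.+1 * (B*n) <= k * (B*n))%N by rewrite leq_mul2r mk' orbT.
  rewrite Hn mulSn; lia.
move: key; have -> : m = k by apply/eqP; rewrite eqn_leq mk mk'.
move=> key.
apply: key; first exact: leq_addr.
rewrite Hn; lia.
Qed.

Lemma core : 0 <= \sum_v y v.
Proof.
have H0 : (0 < A + k*B)%N by rewrite addn_gt0 A0.
pose g j q := zz j (q %/ (A + k*B))%N.
have Hin : forall (r : 'I_k.+1) t, (t < A*(B*n))%N ->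
   0 <= A%:R * zz (r + inord k) (posf t k) + B%:R * \sum_(i<k) zz (r + inord i) (posf t i).
  move=> r t tN.
  have npos : (0 < n)%N by move: tN; case: (n) => //; rewrite !muln0.
  have [x0 _] : exists x0, x0 \in VV ord0 by apply/card_gt0P; rewrite cls.
  apply: (@ineq x0 (fun i => r + inord i) (posf t)); last exact: posf_ok.
  move=> i i' ik i'k ii'; apply/negP => /eqP /addrI /(congr1 val).
  rewrite /= !inordK ?ltnS // => E; by move: ii'; rewrite E eqxx.
have S0 : 0 <= \sum_(r : 'I_k.+1) \sum_(0 <= t < A*(B*n))
   (A%:R * zz (r + inord k) (posf t k) + B%:R * \sum_(i<k) zz (r + inord i) (posf t i)).
  apply: sumr_ge0 => r _; rewrite big_nat; apply: sumr_ge0 => t /andP[_ tN]; exact: Hin.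
have C1 : forall j, \sum_(0 <= t < A*(B*n)) zz j (posf t k) =
    B%:R * \sum_(0 <= u < A*n) g j (k*(B*n) + u)%N.
  move=> j; rewrite -(sum_div (fun u => g j (k*(B*n) + u)%N)) //.
  rewrite (_ : (A*n*B = A*(B*n))%N); last by rewrite -mulnA (mulnC n B).
  by apply: eq_bigr => t _; rewrite /posf ltnn.
have C2 : forall (i : 'I_k) j, \sum_(0 <= t < A*(B*n)) zz j (posf t i) =
    A%:R * \sum_(0 <= u < B*n) g j (i*(B*n) + u)%N.
  move=> i j; rewrite -(sum_div (fun u => g j (i*(B*n) + u)%N)) //.
  rewrite (_ : (B*n*A = A*(B*n))%N); last by rewrite mulnC.
  by apply: eq_bigr => t _; rewrite /posf ltn_ord.
have C3 : forall j, \sum_(0 <= u < A*n) g j (k*(B*n) + u)%N +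
    \sum_(i < k) \sum_(0 <= u < B*n) g j (i*(B*n) + u)%N =
    (A + k*B)%:R * \sum_(v | part v == j) y v.
  move=> j; rewrite -sum_z -sum_div //.
  rewrite (_ : (n * (A + k*B) = k*(B*n) + A*n)%N); last first.
    by rewrite mulnC mulnDl addnC mulnA.
  rewrite (big_cat_nat _ (leq_addr (A*n) (k*(B*n)))) //= addrC.
  congr (_ + _); last by rewrite sum_blocks big_mkord.
  have := big_addn 0 (k*(B*n)+A*n) (k*(B*n)) xpredT (fun q => zz j (q %/ (A + k*B))%N).
  rewrite add0n addKn => ->.
  by apply: eq_bigr => u _; rewrite addnC.
have rot : forall (c : 'I_k.+1) (F : 'I_k.+1 -> R), \sum_r F (r + c) = \sum_j F j.
  by move=> c F; rewrite [RHS](reindex_inj (addIr c)).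
have E : \sum_(r : 'I_k.+1) \sum_(0 <= t < A*(B*n))
   (A%:R * zz (r + inord k) (posf t k) + B%:R * \sum_(i<k) zz (r + inord i) (posf t i))
   = (A*B)%:R * \sum_j ((A + k*B)%:R * \sum_(v | part v == j) y v).
  rewrite (eq_bigr (fun r => A%:R * \sum_(0 <= t < A*(B*n)) zz (r + inord k) (posf t k) +
      B%:R * \sum_(i<k) \sum_(0 <= t < A*(B*n)) zz (r + inord i) (posf t i))); last first.
    by move=> r _; rewrite big_split /= -!mulr_sumr exchange_big.
  have ER : \sum_(r : 'I_k.+1) \sum_(0 <= t < A*(B*n)) zz (r + inord k) (posf t k)
     = \sum_j \sum_(0 <= t < A*(B*n)) zz j (posf t k) by apply: rot.
  have EN : \sum_(r : 'I_k.+1) \sum_(i<k) \sum_(0 <= t < A*(B*n)) zz (r + inord i) (posf t i)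
     = \sum_j \sum_(i<k) \sum_(0 <= t < A*(B*n)) zz j (posf t i).
    rewrite exchange_big [RHS]exchange_big; apply: eq_bigr => i _; exact: rot.
  rewrite big_split /= -[in LHS]mulr_sumr -[in LHS]mulr_sumr ER EN.
  rewrite mulr_sumr [B%:R * _]mulr_sumr [(A*B)%:R * _]mulr_sumr -big_split.
  apply: eq_bigr => j _; rewrite -C3 C1 (eq_bigr _ (fun i _ => C2 i j)) -mulr_sumr natrM.
  by rewrite mulrDr !mulrA [B%:R * A%:R]mulrC.
have Hy : \sum_v y v = \sum_j \sum_(v | part v == j) y v.
  by rewrite (partition_big part xpredT).
move: S0; rewrite E Hy -mulr_sumr mulrA.
rewrite -natrM pmulr_rge0 // ltr0n !muln_gt0 A0 B0 /=.
by rewrite addn_gt0 A0.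
Qed.

End Core.

Lemma rat_pos (a : rat) : 0 < a -> exists A D : nat, [/\ (0 < A)%N, (0 < D)%N & a = A%:R / D%:R].
Proof.
move=> a0; exists `|numq a|%N, `|denq a|%N.
have n0 : 0 < numq a by rewrite numq_gt0.
have d0 := denq_gt0 a.
split; [by rewrite absz_gt0 gt_eqF | by rewrite absz_gt0 gt_eqF | ].
rewrite -{1}(divq_num_den a).
by rewrite -[numq a]gez0_abs ?ltW // -[denq a]gez0_abs ?ltW // !pmulrn.
Qed.

Lemma wchar_sum (R : realFieldType) (T : finType) (al be : R) (x0 : T) (xs : seq T)
  (f : T -> R) : uniq (x0 :: xs) ->
  \sum_v wchar al be ([set u in x0 :: xs], x0) v * f v = al * f x0 + be * \sum_(u <- xs) f u.
Proof.
case/andP => x0xs U.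
rewrite (bigD1 x0) //= /wchar /= eqxx; congr (_ + _).
rewrite big_uniq // mulr_sumr big_mkcond [RHS]big_mkcond /=; apply: eq_bigr => v _.
case: (eqVneq v x0) => [->|vx0] /=; first by rewrite (negbTE x0xs).
by rewrite inE in_cons (negbTE vx0) /=; case: (v \in xs); rewrite ?mul0r.
Qed.

Unset Implicit Arguments.

Theorem lemma2p2 (R : realFieldType) (r n : nat) (a b : rat)
    (T : finType) (e : rel T) (part : T -> 'I_r) :
  (3 <= r)%N -> 0 < a -> a <= b ->
  balanced_rpartite n e part ->
  let h := a + (r.-1)%:R * b in
  delta_star_ge e part ((1 - ratr (b / h)) * (n%:R : R)) ->
  exists w : {set T} * T -> R,
    perfect_frac_tiling r e (ratr a) (ratr b) w.
Proof.
case: r part => [|k] part r3; first by [].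
move=> a0 ab [esym eirr _ cls] h Hdeg.
have b0 : 0 < b by apply: lt_le_trans ab.
have [A1 [D1 [A10 D10 Ea]]] := rat_pos a0.
have [B1 [D2 [B10 D20 Eb]]] := rat_pos b0.
pose A := (A1 * D2)%N; pose B := (B1 * D1)%N.
have A0 : (0 < A)%N by rewrite muln_gt0 A10 D20.
have B0 : (0 < B)%N by rewrite muln_gt0 B10 D10.
pose s : rat := ((D1 * D2)%N%:R)^-1.
have D1n : (D1%:R : rat) != 0 by rewrite pnatr_eq0 -lt0n.
have D2n : (D2%:R : rat) != 0 by rewrite pnatr_eq0 -lt0n.
have Ea' : a = A%:R * s by rewrite Ea /A /s !natrM; field; rewrite D1n D2n.
have Eb' : b = B%:R * s by rewrite Eb /B /s !natrM; field; rewrite D1n D2n.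
have s0 : 0 < s by rewrite /s invr_gt0 ltr0n muln_gt0 D10 D20.
have Hn : ((A + k*B)%N%:R : rat) != 0 by rewrite pnatr_eq0 addn_eq0 negb_and -lt0n A0.
have Ebh : b / h = B%:R / (A + k*B)%N%:R.
  rewrite /h Eb' Ea'; move: Hn; rewrite natrD natrM => Hn.
  field; rewrite Hn gt_eqF //.
  by apply: ltr_wpDr; [rewrite mulr_ge0 // mulr_ge0 // ltW | rewrite mulr_gt0 // ltr0n].
have HF : forall x : T -> R,
    (forall K, K \in [seq K <- index_enum _ | rooted_Kr k.+1 e K] ->
       \sum_v wchar (ratr a) (ratr b) K v * x v <= 0) -> \sum_v 1 * x v <= 0.
  move=> x Hx.
  have rs0 : 0 < ratr s :> R by rewrite ltr0q.
  have Ha : ratr a = A%:R * ratr s :> R by rewrite Ea' rmorphM /= ratr_nat.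
  have Hb : ratr b = B%:R * ratr s :> R by rewrite Eb' rmorphM /= ratr_nat.
  have Hdeg' : forall v j, j != part v ->
      ((A + k*B) * (n - deg_into e part v j) <= B * n)%N.
    move=> v j jv; have := Hdeg v j jv; rewrite Ebh fmorph_div /= !ratr_nat.
    set d := deg_into e part v j => Hd.
    have HH : 0 < (A + k*B)%N%:R :> R by rewrite ltr0n addn_gt0 A0.
    have : ((A + k*B) * n)%N%:R <= ((A + k*B) * d + B * n)%N%:R :> R.
      move: Hd; rewrite -(ler_pM2l HH).
      have -> : (A + k*B)%N%:R * ((1 - B%:R / (A + k*B)%N%:R) * n%:R) =
          (A + k*B)%N%:R * n%:R - B%:R * n%:R :> R.
        by rewrite mulrA mulrBr mulr1 mulrCA divff ?mulr1 ?gt_eqF // mulrBl.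
      by rewrite lerBlDr -!natrM -natrD.
    rewrite ler_nat => Hnat; rewrite mulnBr; lia.
  have Hclq : forall x0 xs, size xs = k -> uniq (x0 :: xs) ->
      (forall u w, u \in x0 :: xs -> w \in x0 :: xs -> u != w -> e u w) ->
      0 <= A%:R * (- x x0) + B%:R * \sum_(u <- xs) - x u.
    move=> x0 xs sz U adj.
    have rK : rooted_Kr k.+1 e ([set u in x0 :: xs], x0).
      rewrite /rooted_Kr /= cardsE (card_uniqP U) /= sz eqxx inE mem_head /=.
      apply/forallP => u; apply/implyP => uK; apply/forallP => w; apply/implyP => wK.
      apply/implyP => uw; rewrite inE in uK; rewrite inE in wK; exact: adj.
    have K1 : ([set u in x0 :: xs], x0) \in [seq K <- index_enum _ | rooted_Kr k.+1 e K].
      by rewrite mem_filter rK mem_index_enum.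
    have := Hx _ K1; rewrite wchar_sum // Ha Hb => H1.
    rewrite sumrN !mulrN -opprD oppr_ge0 -(pmulr_rle0 _ rs0).
    by apply: le_trans H1; rewrite le_eqVlt; apply/orP; left; apply/eqP; ring.
  have := @core R T k n e part A B (fun v => - x v) A0 B0 esym eirr cls Hdeg' Hclq.
  rewrite sumrN oppr_ge0 => H2; apply: le_trans H2.
  by rewrite le_eqVlt; apply/orP; left; apply/eqP; apply: eq_bigr => v _; rewrite mul1r.
have [lam [lam0 Hl]] := @farkas R T _ [seq K <- index_enum _ | rooted_Kr k.+1 e K]
   (filter_uniq _ (index_enum_uniq _)) (fun K v => wchar (ratr a) (ratr b) K v) (fun _ => 1) HF.
exists lam; split => // v; rewrite [RHS](Hl v) big_filter.
by [].
Qed.
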